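(* Let $|\psi\rangle$ be a pure state of a multi-qudit system and $|c_\psi|=\max_{|\phi\rangle}|\langle\psi|\phi\rangle|$, the maximum over pure stabilizer states $|\phi\rangle$ of the same system. For all $\alpha\in(0,1)\cup(1,\infty)$ and $\beta\in(-\infty,0)\cup(0,\infty)$, $$M_{\alpha,\beta}(|\psi\rangle\langle\psi|)=\frac{1}{(1-\alpha)\beta}\left\{\left[\Big(\frac{1+|c_\psi|}{2}\Big)^{\alpha}+\Big(\frac{1-|c_\psi|}{2}\Big)^{\alpha}\right]^{\beta}-1\right\}.$$
   Context: Stabilizer formalism: for a qudit $\mathbb C^d$ with basis $\{|j\rangle\}_{j\in\mathbb Z_d}$, let $X|j\rangle=|j+1\bmod d\rangle$, $Z|j\rangle=\omega^j|j\rangle$, $\omega=e^{2\pi i/d}$, $T_u=\tau^{-u_1u_2}Z^{u_1}X^{u_2}$, $\tau=e^{(d+1)\pi i/d}$; on $n$ qudits Heisenberg–Weyl operators are tensor products of these. Clifford unitaries $V$ satisfy: for every $T_u$ there are $u',\theta$ with $VT_uV^\dagger=e^{i\theta}T_{u'}$. Pure stabilizer states are $V|0\cdots0\rangle$, $V$ Clifford. For $\alpha\in(0,1)\cup(1,\infty)$, $\beta\in(-\infty,0)\cup(0,\infty)$: $S_{\alpha,\beta}(\rho)=\frac{1}{(1-\alpha)\beta}[(\mathrm{Tr}\rho^\alpha)^\beta-1]$, $J_{\alpha,\beta}(\rho,\sigma)=S_{\alpha,\beta}(\tfrac{\rho+\sigma}{2})-\tfrac12S_{\alpha,\beta}(\rho)-\tfrac12S_{\alpha,\beta}(\sigma)$,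 and for a pure state $M_{\alpha,\beta}(|\psi\rangle\langle\psi|)=\min_{|\phi\rangle}J_{\alpha,\beta}(|\psi\rangle\langle\psi|,|\phi\rangle\langle\phi|)$, minimum over pure stabilizer states $|\phi\rangle$ of the same system. *)

(* Defs.v *)
From HB Require Import structures.
From mathcomp Require Import all_boot all_order all_algebra.
From mathcomp Require Import all_classical all_reals all_analysis.
From mathcomp Require Import complex.
Set Implicit Arguments. Unset Strict Implicit. Unset Printing Implicit Defensive.
Import Order.TTheory GRing.Theory Num.Theory.
Local Open Scope ring_scope.
Local Open Scope classical_set_scope.

Section Stab.
Variable R : realType.
Local Notation C := (R[i]).

Definition toC (x : R) : C := Complex x 0.
Definition cabs (z : C) : R := Normc.normc z.
Definition expi (t : R) : C := Complex (cos t) (sin t).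

Definition omega (d : nat) : C := expi (2 * pi / d%:R).
Definition tau (d : nat) : C := expi ((d.+1)%:R * pi / d%:R).

Definition adj m n (A : 'M[C]_(m, n)) : 'M[C]_(n, m) := (map_mx (@conjc R) A)^T.

Definition unitary N (U : 'M[C]_N) : Prop := U *m adj U = 1%:M.

(* Computational basis of n qudits: index j < d^n, the k-th qudit value is the
   k-th base-d digit of j; so index 0 is |0...0>. *)
Definition digit (d j k : nat) : nat := ((j %/ d ^ k) %% d)%N.

(* single-qudit matrix element <a| T_(u1,u2) |b>,
   T_u = tau^{-u1 u2} Z^{u1} X^{u2}, with Z^{u1} X^{u2} |b> = omega^{u1 (b+u2)} |b+u2 mod d> *)
Definition hw1 (d u1 u2 a b : nat) : C :=
  (tau d) ^- (u1 * u2) * (omega d) ^+ (u1 * a) * (a == (b + u2) %% d)%N%:R.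

(* n-qudit Heisenberg-Weyl operator T_u = T_{u_1} (x) ... (x) T_{u_n},
   u given by its two component vectors u1, u2 in Z_d^n *)
Definition HW (n d : nat) (u1 u2 : 'I_n -> 'I_d) : 'M[C]_(d ^ n) :=
  \matrix_(j, k) \prod_(s < n) hw1 d (u1 s) (u2 s) (digit d j s) (digit d k s).

Definition clifford (n d : nat) (V : 'M[C]_(d ^ n)) : Prop :=
  unitary V /\
  forall u1 u2 : 'I_n -> 'I_d, exists (v1 v2 : 'I_n -> 'I_d) (theta : R),
    V *m HW u1 u2 *m adj V = expi theta *: HW v1 v2.

Definition ket0 (N : nat) : 'cV[C]_N := \col_j ((val j == 0%N)%:R).

Definition stabilizer_state (n d : nat) (phi : 'cV[C]_(d ^ n)) : Prop :=
  exists V : 'M[C]_(d ^ n), clifford V /\ phi = V *m ket0 (d ^ n).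

Definition inner N (psi phi : 'cV[C]_N) : C := (adj psi *m phi) 0 0.

Definition pure_state N (psi : 'cV[C]_N) : Prop := inner psi psi = 1.

Definition ketbra N (psi : 'cV[C]_N) : 'M[C]_N := psi *m adj psi.

Definition spectrum_of N (A : 'M[C]_N) (l : 'I_N -> R) : Prop :=
  exists U : 'M[C]_N, unitary U /\
    A = U *m diag_mx (\row_i toC (l i)) *m adj U.

Definition trpow N (alpha : R) (A : 'M[C]_N) : R :=
  xget 0 [set t : R | exists l, spectrum_of A l /\ (forall i, 0 <= l i) /\
                          t = \sum_i (l i) `^ alpha].

Definition S_ab N (alpha beta : R) (rho : 'M[C]_N) : R :=
  ((trpow alpha rho) `^ beta - 1) / ((1 - alpha) * beta).

Definition J_ab N (alpha beta : R) (rho sigma : 'M[C]_N) : R :=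
  S_ab alpha beta ((1 / 2 : C) *: (rho + sigma))
  - S_ab alpha beta rho / 2 - S_ab alpha beta sigma / 2.

End Stab.
Arguments stabilizer_state {R} n d phi.
Arguments clifford {R} n d V.

(* Main.v *)
Require Import Defs.
From HB Require Import structures.
From mathcomp Require Import all_boot all_order all_algebra.
From mathcomp Require Import all_classical all_reals all_analysis.
From mathcomp Require Import complex ring lra spectral.
Set Implicit Arguments. Unset Strict Implicit. Unset Printing Implicit Defensive.
Import Order.TTheory GRing.Theory Num.Theory Num.Def.
Local Open Scope ring_scope.

Section An.
Variable R : realType.

Lemma convp (p t x y : R) : 1 <= p -> 0 <= t <= 1 -> 0 <= x -> 0 <= y ->
  (t * x + (1 - t) * y) `^ p <= t * x `^ p + (1 - t) * y `^ p.
Proof.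
move=> p1 /andP[t0 t1] x0 y0.
have ht : Itv.spec (@Itv.num_sem R) (Itv.Real `[0%Z, 1%Z]) t.
  by rewrite /Itv.spec /= /Itv.num_sem /= in_itv /= ger0_real //= t0 t1.
have := @convex_powR R p p1 (Itv.mk ht) x y.
rewrite !inE /= !in_itv /= !andbT => /(_ x0 y0).
by rewrite !convRE /=.
Qed.

Lemma concp (p t x y : R) : 0 < p <= 1 -> 0 <= t <= 1 -> 0 <= x -> 0 <= y ->
  t * x `^ p + (1 - t) * y `^ p <= (t * x + (1 - t) * y) `^ p.
Proof.
move=> /andP[p0 p1] /andP[t0 t1] x0 y0.
have q1 : 1 <= p^-1 by rewrite invf_ge1.
have tt : 0 <= t <= 1 by rewrite t0 t1.
have := @convp p^-1 t _ _ q1 tt (powR_ge0 x p) (powR_ge0 y p).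
rewrite -!powRrM !mulfV ?gt_eqF // !powRr1 // => H.
have w0 : 0 <= t * x `^ p + (1 - t) * y `^ p.
  by rewrite addr_ge0 // mulr_ge0 // ?powR_ge0 // subr_ge0.
have := @ge0_ler_powR R p (ltW p0) _ _ _ _ H.
rewrite -powRrM mulVf ?gt_eqF // powRr1 //; apply.
- by rewrite nnegrE powR_ge0.
- by rewrite nnegrE addr_ge0 // mulr_ge0 // subr_ge0.
Qed.

Definition Gf (p x : R) := ((1 + x) / 2) `^ p + ((1 - x) / 2) `^ p.

Lemma Gf_split (x y : R) : 0 <= x <= y -> y <= 1 -> 0 < y ->
  let t := (x + y) / (2 * y) in
  [/\ 0 <= t <= 1, (1 + x) / 2 = t * ((1 + y) / 2) + (1 - t) * ((1 - y) / 2),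
   (1 - x) / 2 = t * ((1 - y) / 2) + (1 - t) * ((1 + y) / 2),
   0 <= (1 + y) / 2 & 0 <= (1 - y) / 2].
Proof.
move=> /andP[x0 xy] y1 y0 t.
have y0' : y != 0 by rewrite gt_eqF.
split.
- apply/andP; split; first by rewrite /t; apply: divr_ge0; lra.
  by rewrite /t ler_pdivrMr ?mulr_gt0 // mul1r; lra.
- by rewrite /t; field.
- by rewrite /t; field.
- lra.
- lra.
Qed.

Lemma Gf_convex (p x y : R) : 1 <= p -> 0 <= x <= y -> y <= 1 -> Gf p x <= Gf p y.
Proof.
move=> p1 xy y1.
have [y0|y0] := leP y 0.
  have -> : x = y by move: xy => /andP[]; lra.
  by [].
have [tt e1 e2 a0 b0] := Gf_split xy y1 y0.
rewrite /Gf e1 e2.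
set t := (x + y) / (2 * y) in tt e1 e2 *.
apply: le_trans (lerD (convp p1 tt a0 b0) (convp p1 tt b0 a0)) _.
rewrite le_eqVlt; apply/orP; left; apply/eqP; ring.
Qed.

Lemma Gf_concave (p x y : R) : 0 < p <= 1 -> 0 <= x <= y -> y <= 1 -> Gf p y <= Gf p x.
Proof.
move=> p1 xy y1.
have [y0|y0] := leP y 0.
  have -> : x = y by move: xy => /andP[]; lra.
  by [].
have [tt e1 e2 a0 b0] := Gf_split xy y1 y0.
rewrite /Gf e1 e2.
set t := (x + y) / (2 * y) in tt e1 e2 *.
apply: le_trans _ (lerD (concp p1 tt a0 b0) (concp p1 tt b0 a0)).
rewrite le_eqVlt; apply/orP; left; apply/eqP; ring.
Qed.


Lemma powR_mono_pos (b u v : R) : 0 < b -> 0 < v <= u -> v `^ b <= u `^ b.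
Proof.
move=> b0 /andP[v0 vu]; apply: ge0_ler_powR; rewrite ?nnegrE //.
- exact: ltW.
- exact: ltW.
- exact: (le_trans (ltW v0) vu).
Qed.

Lemma powR_mono_neg (b u v : R) : b < 0 -> 0 < v <= u -> u `^ b <= v `^ b.
Proof.
move=> b0 /andP[v0 vu].
have u0 : 0 < u by exact: (lt_le_trans v0 vu).
have -> : b = - (- b) by rewrite opprK.
set c := - b.
have c0 : 0 < c by rewrite oppr_gt0.
rewrite (powRN u) (powRN v).
rewrite lef_pV2 ?posrE ?powR_gt0 //.
apply: powR_mono_pos => //.
by rewrite v0 vu.
Qed.

Definition hf (a b x : R) := ((Gf a x) `^ b - 1) / ((1 - a) * b).

Lemma Gf_gt0 (a x : R) : 0 <= x <= 1 -> 0 < Gf a x.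
Proof.
move=> /andP[x0 x1]; rewrite /Gf.
apply: (@lt_le_trans _ _ (((1 + x) / 2) `^ a)).
  by apply: powR_gt0; lra.
by rewrite lerDl powR_ge0.
Qed.

Lemma hf_anti (a b x y : R) : 0 < a -> a != 1 -> b != 0 ->
  0 <= x <= y -> y <= 1 -> hf a b y <= hf a b x.
Proof.
move=> a0 a1 b0 xy y1.
have x1 : 0 <= x <= 1 by move: xy => /andP[]; lra.
have y01 : 0 <= y <= 1 by move: xy => /andP[]; lra.
have Gx := Gf_gt0 a x1; have Gy := Gf_gt0 a y01.
rewrite /hf.
set k := ((1 - a) * b)^-1.
have kpos (H : 0 < k) (H2 : Gf a y `^ b <= Gf a x `^ b) :
    (Gf a y `^ b - 1) * k <= (Gf a x `^ b - 1) * k.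
  by apply: ler_wpM2r; [exact: ltW | rewrite lerD2r].
have kneg (H : k < 0) (H2 : Gf a x `^ b <= Gf a y `^ b) :
    (Gf a y `^ b - 1) * k <= (Gf a x `^ b - 1) * k.
  by apply: ler_wnM2r; [exact: ltW | rewrite lerD2r].
have [alt|agt] := ltP a 1.
  have GG : Gf a y <= Gf a x by apply: Gf_concave; rewrite ?a0 ?(ltW alt).
  have [blt|bgt] := ltP b 0.
    apply: kneg; first by rewrite /k invr_lt0 pmulr_rlt0 // subr_gt0.
    exact: powR_mono_neg blt (introT andP (conj Gy GG)).
  have bgt' : 0 < b by rewrite lt_neqAle eq_sym b0 bgt.
  apply: kpos; first by rewrite /k invr_gt0 mulr_gt0 // subr_gt0.
  exact: powR_mono_pos bgt' (introT andP (conj Gy GG)).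
have agt' : 1 < a by rewrite lt_neqAle eq_sym a1 agt.
have GG : Gf a x <= Gf a y by apply: Gf_convex.
have [blt|bgt] := ltP b 0.
  apply: kpos; first by rewrite /k invr_gt0 nmulr_rgt0 // subr_lt0.
  exact: powR_mono_neg blt (introT andP (conj Gx GG)).
have bgt' : 0 < b by rewrite lt_neqAle eq_sym b0 bgt.
apply: kneg; first by rewrite /k invr_lt0 nmulr_rlt0 // subr_lt0.
exact: powR_mono_pos bgt' (introT andP (conj Gx GG)).
Qed.

End An.

Section CX.
Variable R : realType.
Local Notation C := (R[i]).

Lemma toCE (x : R) : toC x = real_complex R x. Proof. by []. Qed.
Lemma toCM (x y : R) : toC (x * y) = toC x * toC y. Proof. by rewrite !toCE rmorphM. Qed.
Lemma toCD (x y : R) : toC (x + y) = toC x + toC y. Proof. by rewrite !toCE rmorphD. Qed.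
Lemma toCB (x y : R) : toC (x - y) = toC x - toC y. Proof. by rewrite !toCE rmorphB. Qed.
Lemma toCV (x : R) : toC (x^-1) = (toC x)^-1. Proof. by rewrite !toCE fmorphV. Qed.
Lemma toC1 : toC 1 = 1 :> C. Proof. by []. Qed.
Lemma toC0 : toC 0 = 0 :> C. Proof. by []. Qed.
Lemma toCn n : toC n%:R = n%:R :> C. Proof. by rewrite toCE rmorph_nat. Qed.
Lemma conj_toC (x : R) : conjc (toC x) = toC x. Proof. exact: conjc_real. Qed.
Lemma toC_inj (x y : R) : toC x = toC y -> x = y. Proof. by case. Qed.
Lemma toC_le (x y : R) : (toC x <= toC y) = (x <= y). Proof. exact: lecR. Qed.

Lemma cabs_ge0 (z : C) : 0 <= cabs z.
Proof. by case: z => a b; rewrite /cabs /=; apply: sqrtr_ge0. Qed.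

Lemma normc_sq (z : C) : z * conjc z = toC (cabs z ^+ 2).
Proof.
case: z => a b; rewrite /cabs /= sqr_sqrtr ?addr_ge0 ?sqr_ge0 //.
apply/eqP; rewrite eq_complex /=; apply/andP; split; apply/eqP; ring.
Qed.

Lemma conj_mul_ge0 (x : C) : 0 <= conjc x * x.
Proof. by rewrite mulrC; exact: mul_conjC_ge0. Qed.


Lemma innerE n (u v : 'cV[C]_n) : inner u v = \sum_t conjc (u t 0) * v t 0.
Proof. by rewrite /inner !mxE; apply: eq_bigr => t _; rewrite !mxE. Qed.

Lemma innerDr n (u v w : 'cV[C]_n) : inner u (v + w) = inner u v + inner u w.
Proof. by rewrite !innerE -big_split; apply: eq_bigr => t _; rewrite !mxE mulrDr. Qed.
Lemma innerZr n (u v : 'cV[C]_n) a : inner u (a *: v) = a * inner u v.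
Proof. by rewrite !innerE mulr_sumr; apply: eq_bigr => t _; rewrite !mxE; ring. Qed.
Lemma innerC n (u v : 'cV[C]_n) : inner v u = conjc (inner u v).
Proof. by rewrite !innerE rmorph_sum; apply: eq_bigr => t _; rewrite rmorphM /= conjcK mulrC. Qed.
Lemma innerDl n (u v w : 'cV[C]_n) : inner (v + w) u = inner v u + inner w u.
Proof. by rewrite innerC innerDr rmorphD /= -!innerC. Qed.
Lemma innerZl n (u v : 'cV[C]_n) a : inner (a *: v) u = conjc a * inner v u.
Proof. by rewrite innerC innerZr rmorphM /= -innerC. Qed.
Lemma innerNr n (u v : 'cV[C]_n) : inner u (- v) = - inner u v.
Proof. by rewrite -scaleN1r innerZr mulN1r. Qed.
Lemma innerNl n (u v : 'cV[C]_n) : inner (- v) u = - inner v u.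
Proof. by rewrite -scaleN1r innerZl rmorphN1 mulN1r. Qed.

Lemma inner_ge0 n (u : 'cV[C]_n) : 0 <= inner u u.
Proof. by rewrite innerE; apply: sumr_ge0 => t _; apply: conj_mul_ge0. Qed.

Lemma inner_eq0 n (u : 'cV[C]_n) : inner u u = 0 -> u = 0.
Proof.
rewrite innerE => /eqP; rewrite psumr_eq0; last by move=> t _; apply: conj_mul_ge0.
move=> /allP H; apply/matrixP => t j; rewrite [j]ord1 mxE.
have := H t (mem_index_enum t); rewrite mulrC => /implyP /(_ isT).
by rewrite mul_conjC_eq0 => /eqP.
Qed.

Lemma inner_toC n (u : 'cV[C]_n) : inner u u = toC (complex.Re (inner u u)).
Proof.
have := inner_ge0 u; case: (inner u u) => a b.
by rewrite lecE /= => /andP[/eqP -> _].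
Qed.

Lemma ketbraZ n (v : 'cV[C]_n) a : ketbra (a *: v) = (a * conjc a) *: ketbra v.
Proof.
apply/matrixP => i j; rewrite !mxE !big_ord1 !mxE rmorphM /=; ring.
Qed.

Lemma adjM m n p (A : 'M[C]_(m, n)) (B : 'M[C]_(n, p)) : adj (A *m B) = adj B *m adj A.
Proof. by rewrite /adj map_mxM trmx_mul. Qed.

End CX.

Section LA.
Variable R : realType.
Local Notation C := (R[i]).

Lemma unitary_inv N (U : 'M[C]_N) : unitary U -> adj U *m U = 1%:M.
Proof. by move=> /mulmx1C. Qed.

Lemma char_poly_conjU N (U D : 'M[C]_N) : unitary U ->
  char_poly (U *m D *m adj U) = char_poly D.
Proof.
move=> hU.
set P := map_mx polyC U; set Q := map_mx polyC (adj U).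
have PQ : P *m Q = 1%:M by rewrite -map_mxM hU map_mx1.
have E : char_poly_mx (U *m D *m adj U) = P *m char_poly_mx D *m Q.
  rewrite /char_poly_mx mulmxBr mulmxBl mul_mx_scalar -scalemxAl PQ.
  by rewrite -!map_mxM scalemx1.
by rewrite /char_poly E !det_mulmx mulrAC -det_mulmx PQ det1 mul1r.
Qed.


Lemma char_poly_spec N (A : 'M[C]_N) l : spectrum_of A l ->
  char_poly A = \prod_(x <- [seq toC (l i) | i <- enum 'I_N]) ('X - x%:P).
Proof.
move=> [U [hU ->]]; rewrite char_poly_conjU // char_poly_trig ?diag_mx_is_trig //.
rewrite big_map big_enum /=; apply: eq_bigr => i _.
by rewrite !mxE eqxx mulr1n.
Qed.

Lemma spec_perm N (A : 'M[C]_N) l l' : spectrum_of A l -> spectrum_of A l' ->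
  perm_eq [seq l i | i <- enum 'I_N] [seq l' i | i <- enum 'I_N].
Proof.
move=> h h'.
have := prod_XsubC_eq (etrans (esym (char_poly_spec h)) (char_poly_spec h')).
move=> /(perm_map (@complex.Re R)); rewrite -!map_comp.
by congr perm_eq; apply: eq_map.
Qed.

Lemma spec_sum N (A : 'M[C]_N) l l' (f : R -> R) :
  spectrum_of A l -> spectrum_of A l' ->
  \sum_i f (l i) = \sum_i f (l' i).
Proof.
move=> h h'.
have E (m : 'I_N -> R) : \sum_i f (m i) = \sum_(x <- [seq m i | i <- enum 'I_N]) f x.
  by rewrite big_map big_enum.
by rewrite !E; apply: perm_big (spec_perm h h').
Qed.

Lemma trpow_spec N (alpha : R) (A : 'M[C]_N) l : spectrum_of A l ->
  (forall i, 0 <= l i) -> trpow alpha A = \sum_i (l i) `^ alpha.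
Proof.
move=> h l0; rewrite /trpow.
case: xgetP => [t _ [l' [h' [_ ->]]]|].
  exact: (@spec_sum N A l' l (fun x : R => x `^ alpha) h' h).
by move=> /(_ (\sum_i (l i) `^ alpha)) H; exfalso; apply: H; exists l.
Qed.

End LA.

Section GS.
Variable R : realType.
Local Notation C := (R[i]).

Lemma dotE n (u v : 'rV[C]_n) : dotmx u v = \sum_j u 0 j * conjc (v 0 j).
Proof. by rewrite dotmxE !mxE; apply: eq_bigr => j _; rewrite !mxE. Qed.

Lemma adj_tc m n (A : 'M[C]_(m, n)) : adj A = ((A^T) ^ conjC)%sesqui.
Proof. by rewrite /adj map_trmx. Qed.

Section Sch.
Variables (N m : nat) (A : 'M[C]_N).
Hypothesis hA : forall i j : 'I_N, (i < m)%N -> (j < m)%N ->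
  dotmx (row i A) (row j A) = (i == j)%:R.
Let S := schmidt A.

Lemma S_orth (i j : 'I_N) : dotmx (row i S) (row j S) = (i == j)%:R.
Proof.
by move: i j; apply/row_unitarymxP; apply: schmidt_unitarymx.
Qed.

Lemma S_expand (u : 'rV[C]_N) : u = \sum_k dotmx u (row k S) *: row k S.
Proof.
have hS : S *m (S^T ^ conjC)%sesqui = 1%:M by apply/unitarymxP; apply: schmidt_unitarymx.
have hS' := mulmx1C hS.
rewrite -{1}(mulmx1 u) -hS' mulmxA mulmx_sum_row.
apply: eq_bigr => k _; congr (_ *: _).
by rewrite dotE !mxE; apply: eq_bigr => j _; rewrite !mxE.
Qed.

Lemma S_ortho_later (i k : 'I_N) : (i < k)%N -> dotmx (row i A) (row k S) = 0.
Proof.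
move=> ik.
have sub := row_schmidt_sub A i.
have : (row i A <= kermx (map_mx conjC (row k S)^T))%MS.
  apply: submx_trans sub _; apply/sumsmx_subP => k0 k0i.
  rewrite genmxE; apply/sub_kermxP; apply/rowP => z; rewrite !mxE.
  have := S_orth k0 k; rewrite dotE.
  have -> : (k0 == k) = false by apply/negbTE; rewrite neq_ltn (leq_ltn_trans k0i ik).
  move=> E; rewrite -[RHS](_ : false%:R = 0) // -E.
  by apply: eq_bigr => j _; rewrite !mxE.
move/sub_kermxP => /rowP /(_ 0); rewrite !mxE => H.
rewrite dotE -[RHS]H.
by apply: eq_bigr => j _; rewrite !mxE.
Qed.


Lemma S_keep (i : 'I_N) : (i < m)%N -> row i S = row i A.
Proof.
suff H : forall k (i : 'I_N), (i < k)%N -> (i < m)%N -> row i S = row i A.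
  by move=> im; apply: (H i.+1) => //.
elim=> [//|k IH] {}i ik im.
rewrite ltnS leq_eqVlt in ik; case/orP: ik => [/eqP ik|ik]; last exact: IH.
set c := dotmx (row i A) (row i S).
have E : row i A = c *: row i S.
  rewrite {1}(S_expand (row i A)) (bigD1 i) //= big1 ?addr0 //.
  move=> j ji; have := ji; rewrite -val_eqE /= neq_ltn => /orP[ji'|ij].
  - have jm : (j < m)%N := ltn_trans ji' im.
    have jk : (j < k)%N by rewrite -ik.
    by rewrite IH // hA // eq_sym (negbTE ji) scale0r.
  - by rewrite (S_ortho_later ij) scale0r.
have c0 : 0 <= c := form1_row_schmidt A i.
have c1 : c * c = 1.
  have h1 := hA im im; rewrite eqxx in h1; rewrite -[RHS]h1.
  have cc : conjc c = c by exact: (geC0_conj c0).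
  rewrite [X in dotmx _ X]E dotE.
  have -> : \sum_j row i A 0 j * conjc ((c *: row i S) 0 j) = conjc c * c.
    rewrite /c dotE mulr_sumr; apply: eq_bigr => j _.
    rewrite !mxE rmorphM /=; ring.
  by rewrite cc.
have c1' : c = 1.
  have := sqrf_eq1 c; rewrite expr2 c1 eqxx => /esym/orP[/eqP //|/eqP cN].
  by move: c0; rewrite cN oppr_ge0 ler10.
by rewrite E c1' scale1r.
Qed.

End Sch.

Lemma adjK m n (M : 'M[C]_(m, n)) : adj (adj M) = M.
Proof. by apply/matrixP => a b; rewrite !mxE conjcK. Qed.

Lemma ketbraE n (v : 'cV[C]_n) a b : ketbra v a b = v a 0 * conjc (v b 0).
Proof. by rewrite !mxE big_ord1 !mxE. Qed.

Lemma orth_le N m (v : nat -> 'cV[C]_N) :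
  (forall k k', (k < m)%N -> (k' < m)%N -> inner (v k) (v k') = (k == k')%:R) ->
  (m <= N)%N.
Proof.
move=> hv.
pose M : 'M[C]_(m, N) := \matrix_(i, j) conjc (v i j 0).
have hM : M \is unitarymx.
  apply/row_unitarymxP => i j; rewrite dotE -val_eqE /= -hv // innerE.
  by apply: eq_bigr => t _; rewrite !mxE conjcK.
by rewrite -(mxrank_unitary hM) rank_leq_col.
Qed.

Lemma spec_build N m (v : nat -> 'cV[C]_N) (l : nat -> R) :
  (forall k k', (k < m)%N -> (k' < m)%N -> inner (v k) (v k') = (k == k')%:R) ->
  spectrum_of (\sum_(k < m) toC (l k) *: ketbra (v k))
              (fun i : 'I_N => if (i < m)%N then l i else 0).
Proof.
move=> hv.
have mN := orth_le hv.
pose A0 : 'M[C]_N := \matrix_(i, j) if (i < m)%N then conjc (v i j 0) else 0.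
have hA : forall i j : 'I_N, (i < m)%N -> (j < m)%N ->
    dotmx (row i A0) (row j A0) = (i == j)%:R.
  move=> i j im jm; rewrite dotE -val_eqE /= -hv // innerE.
  by apply: eq_bigr => t _; rewrite !mxE im jm conjcK.
set S := schmidt A0.
have hS : S *m adj S = 1%:M.
  by rewrite adj_tc; apply/unitarymxP; apply: schmidt_unitarymx.
exists (adj S); split; first by rewrite /unitary adjK; apply: mulmx1C.
rewrite adjK; apply/matrixP => a b.
rewrite summxE mxE.
rewrite mul_mx_diag.
rewrite (big_ord_widen N (fun k => (toC (l k) *: ketbra (v k)) a b) mN).
rewrite big_mkcond /=; apply: eq_bigr => j _; rewrite !mxE.
case: ifP => jm.
  have := S_keep hA jm => /rowP /(_ b); rewrite !mxE jm => ->.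
  have := S_keep hA jm => /rowP /(_ a); rewrite !mxE jm => ->.
  by rewrite big_ord1 !mxE conjcK; ring.
have -> : toC 0 = 0 :> C by [].
by rewrite mulr0 mul0r.
Qed.

End GS.

Section Fin.
Variable R : realType.
Local Notation C := (R[i]).

Lemma trpow_build N m (v : nat -> 'cV[C]_N) (l : nat -> R) (alpha : R) :
  alpha != 0 ->
  (forall k k', (k < m)%N -> (k' < m)%N -> inner (v k) (v k') = (k == k')%:R) ->
  (forall k, (k < m)%N -> 0 <= l k) ->
  trpow alpha (\sum_(k < m) toC (l k) *: ketbra (v k)) = \sum_(k < m) (l k) `^ alpha.
Proof.
move=> a0 hv l0.
rewrite (trpow_spec alpha (spec_build l hv)); last first.
  by move=> i; case: ifP => // /l0.
rewrite (big_ord_widen N (fun k => l k `^ alpha) (orth_le hv)) big_mkcond /=.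
rewrite [RHS]big_mkcond /=.
by apply: eq_bigr => i _; case: ifP => //; rewrite powR0.
Qed.

Lemma trpow_pure N (v : 'cV[C]_N) (alpha : R) : alpha != 0 -> inner v v = 1 ->
  trpow alpha (ketbra v) = 1.
Proof.
move=> a0 hv.
have := @trpow_build N 1 (fun _ => v) (fun _ => 1) alpha a0.
rewrite !big_ord1 toC1 scale1r powR1 => -> //.
by move=> k k'; rewrite !ltnS !leqn0 => /eqP -> /eqP ->.
Qed.


Lemma cs_w n (psi phi : 'cV[C]_n) : inner psi psi = 1 -> inner phi phi = 1 ->
  inner (phi - inner psi phi *: psi) (phi - inner psi phi *: psi)
  = toC (1 - cabs (inner psi phi) ^+ 2).
Proof.
move=> h1 h2; set z := inner psi phi.
rewrite innerDl !innerDr !innerNl !innerNr !innerZl !innerZr h1 h2.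
rewrite (innerC psi phi) -/z toCB toC1 -normc_sq; ring.
Qed.

Lemma cs_le1 n (psi phi : 'cV[C]_n) : inner psi psi = 1 -> inner phi phi = 1 ->
  cabs (inner psi phi) <= 1.
Proof.
move=> h1 h2; have := inner_ge0 (phi - inner psi phi *: psi).
rewrite cs_w // -toC0 toC_le => H.
have := cabs_ge0 (inner psi phi); nra.
Qed.

Lemma cs_eq1 n (psi phi : 'cV[C]_n) : inner psi psi = 1 -> inner phi phi = 1 ->
  cabs (inner psi phi) = 1 -> phi = inner psi phi *: psi.
Proof.
move=> h1 h2 e; have := cs_w h1 h2; rewrite e expr1n subrr toC0 => /inner_eq0.
by move/eqP; rewrite subr_eq0 => /eqP.
Qed.


Lemma mix2 n (psi phi : 'cV[C]_n) (r alpha : R) : alpha != 0 ->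
  inner psi psi = 1 -> inner phi phi = 1 -> inner psi phi = toC r -> 0 <= r < 1 ->
  trpow alpha ((1 / 2 : C) *: (ketbra psi + ketbra phi)) = Gf alpha r.
Proof.
move=> a0 h1 h2 h12 /andP[r0 r1].
have h21 : inner phi psi = toC r by rewrite innerC h12 conj_toC.
set sp := Num.sqrt (2 * (1 + r)); set sm := Num.sqrt (2 * (1 - r)).
have sp0 : 0 < sp by rewrite sqrtr_gt0; lra.
have sm0 : 0 < sm by rewrite sqrtr_gt0; lra.
have sp2 : sp ^+ 2 = 2 * (1 + r) by rewrite sqr_sqrtr //; lra.
have sm2 : sm ^+ 2 = 2 * (1 - r) by rewrite sqr_sqrtr //; lra.
pose v k := if k == 0%N then toC (sp^-1) *: (psi + phi) else toC (sm^-1) *: (psi - phi).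
pose l k := if k == 0%N then (1 + r) / 2 else (1 - r) / 2.
have epp : inner (psi + phi) (psi + phi) = toC (2 * (1 + r)).
  rewrite innerDl !innerDr h1 h2 h12 h21 toCM !toCD !toC1; ring.
have emm : inner (psi - phi) (psi - phi) = toC (2 * (1 - r)).
  rewrite innerDl !innerDr !innerNl !innerNr h1 h2 h12 h21 toCM !toCB !toCD !toC1; ring.
have epm : inner (psi + phi) (psi - phi) = 0.
  rewrite innerDl !innerDr !innerNr h1 h2 h12 h21; ring.
have emp : inner (psi - phi) (psi + phi) = 0.
  rewrite innerDl !innerDr !innerNl h1 h2 h12 h21; ring.
have hv : forall k k', (k < 2)%N -> (k' < 2)%N -> inner (v k) (v k') = (k == k')%:R.
  move=> [|[|//]] [|[|//]] _ _; rewrite /v /= !innerZl !innerZr !conj_toC ?epp ?emm ?epm ?emp ?mulr0 //.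
  - rewrite -!toCM -toC1; congr toC; rewrite -sp2; field; exact: lt0r_neq0.
  - rewrite -!toCM -toC1; congr toC; rewrite -sm2; field; exact: lt0r_neq0.
have hl : forall k, (k < 2)%N -> 0 <= l k.
  by move=> [|[|//]] _; rewrite /l /=; lra.
have E : (1 / 2 : C) *: (ketbra psi + ketbra phi) = \sum_(k < 2) toC (l k) *: ketbra (v k).
  rewrite big_ord_recl big_ord1 /= /v /l /= !ketbraZ !scalerA !conj_toC -!toCM.
  have -> : (1 + r) / 2 * (sp^-1 * sp^-1) = 1 / 4.
    by rewrite -invfM -expr2 sp2; field; apply: lt0r_neq0; lra.
  rewrite [X in toC X *: ketbra (psi - phi)](_ : _ = 1 / 4); last first.
    by rewrite -invfM -expr2 sm2; field; apply: lt0r_neq0; lra.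
  apply/matrixP => a b; rewrite !mxE !big_ord1 !mxE.
  rewrite toCM toC1 toCV (toCn _ 4) !rmorphD !rmorphN /=.
  by field.
rewrite E trpow_build // big_ord_recl big_ord1 /= /l /= /Gf.
by [].
Qed.


Lemma conj_mul_toC (x : C) (y : R) : conjc (x * toC y) = conjc x * toC y.
Proof.
case: x => a b; apply/eqP; rewrite eq_complex /=; apply/andP; split; apply/eqP; ring.
Qed.

Lemma trpow_mix n (psi phi : 'cV[C]_n) (alpha : R) : alpha != 0 ->
  inner psi psi = 1 -> inner phi phi = 1 ->
  trpow alpha ((1 / 2 : C) *: (ketbra psi + ketbra phi)) = Gf alpha (cabs (inner psi phi)).
Proof.
move=> a0 h1 h2.
set z := inner psi phi; set r := cabs z.
have r0 : 0 <= r := cabs_ge0 z.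
have r1 : r <= 1 := cs_le1 h1 h2.
case: (ltP r 1) => [rlt | rge].
  have [zeta [e1 e2]] : exists zeta : C, zeta * z = toC r /\ zeta * conjc zeta = 1.
    case: (eqVneq z 0) => [z0 | z0].
      exists 1; split; last by rewrite conjc1 mulr1.
      by rewrite mul1r /r z0 /cabs Normc.normc0.
    have rne : r != 0 by apply: contra z0 => /eqP /Normc.eq0_normc ->.
    have rne' : toC r != 0 by apply: contra rne => /eqP; rewrite -toC0 => /toC_inj ->.
    exists (conjc z * toC (r^-1)); split.
      rewrite mulrAC [conjc z * z]mulrC normc_sq -/r expr2 toCM toCV.
      by field.
    rewrite conj_mul_toC conjcK mulrACA [conjc z * z]mulrC normc_sq -/r.
    rewrite expr2 !toCM toCV; field; exact: rne'.
  set phi' := zeta *: phi.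
  have hk : ketbra phi' = ketbra phi by rewrite ketbraZ e2 scale1r.
  have hu : inner phi' phi' = 1 by rewrite innerZl innerZr h2 mulr1 mulrC e2.
  have hi : inner psi phi' = toC r by rewrite innerZr e1.
  by rewrite -hk; apply: mix2 => //; rewrite r0 rlt.
have r1' : r = 1 by apply/eqP; rewrite eq_le r1 rge.
have ephi := cs_eq1 h1 h2 r1'.
have kphi : ketbra phi = ketbra psi.
  by rewrite {1}ephi ketbraZ normc_sq -/z -/r r1' expr1n toC1 scale1r.
rewrite kphi scalerDr -scalerDl.
have -> : (1 / 2 : C) + 1 / 2 = 1 by field.
rewrite scale1r trpow_pure // /Gf r1' subrr mul0r powR0 // addr0.
have -> : (1 + 1) / 2 = 1 :> R by field.
by rewrite powR1.
Qed.

Lemma S_pure n (v : 'cV[C]_n) (alpha beta : R) : alpha != 0 -> inner v v = 1 ->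
  S_ab alpha beta (ketbra v) = 0.
Proof. by move=> a0 hv; rewrite /S_ab trpow_pure // powR1 subrr mul0r. Qed.

Lemma J_eq n (psi phi : 'cV[C]_n) (alpha beta : R) : alpha != 0 ->
  inner psi psi = 1 -> inner phi phi = 1 ->
  J_ab alpha beta (ketbra psi) (ketbra phi) = hf alpha beta (cabs (inner psi phi)).
Proof.
move=> a0 h1 h2; rewrite /J_ab !S_pure // mul0r !subr0 /S_ab trpow_mix //.
Qed.

Lemma stab_unit n d (phi : 'cV[C]_(d ^ n)) : (1 < d)%N -> stabilizer_state n d phi ->
  inner phi phi = 1.
Proof.
move=> hd [V [[hV _] ->]].
rewrite /inner adjM -mulmxA (mulmxA (adj V)) unitary_inv // mul1mx.
have N0 : (0 < d ^ n)%N by rewrite expn_gt0 (ltnW hd).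
rewrite !mxE (bigD1 (Ordinal N0)) //= big1 ?addr0.
  by rewrite !mxE /= mulr1 oppr0.
move=> j /negbTE; rewrite -val_eqE /= !mxE => ->.
by rewrite mulr0.
Qed.

End Fin.

Theorem proposition2 (R : realType) (d n : nat) (hd : (1 < d)%N)
    (psi : 'cV[R[i]]_(d ^ n)) (hpsi : pure_state psi)
    (c : R)
    (hc_att : exists phi, stabilizer_state n d phi /\ cabs (inner psi phi) = c)
    (hc_max : forall phi, stabilizer_state n d phi -> cabs (inner psi phi) <= c)
    (alpha beta : R) (ha0 : 0 < alpha) (ha1 : alpha != 1) (hb : beta != 0) :
  let F := (((((1 + c) / 2) `^ alpha + ((1 - c) / 2) `^ alpha) `^ beta) - 1)
             / ((1 - alpha) * beta) in
  (exists phi, stabilizer_state n d phi /\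
     J_ab alpha beta (ketbra psi) (ketbra phi) = F) /\
  (forall phi, stabilizer_state n d phi ->
     F <= J_ab alpha beta (ketbra psi) (ketbra phi)).
Proof.
move=> F.
have a0 : alpha != 0 by rewrite gt_eqF.
have hp : inner psi psi = 1 := hpsi.
have [phi0 [hs0 hc0]] := hc_att.
have c1 : c <= 1 by rewrite -hc0; apply: cs_le1 => //; exact: stab_unit hd hs0.
have FE : F = hf alpha beta c by rewrite /F /hf /Gf.
split.
  exists phi0; split; first exact: hs0.
  rewrite FE J_eq; [by rewrite hc0 | exact: a0 | exact: hp | exact: stab_unit hd hs0].
move=> phi hs.
rewrite FE J_eq; [| exact: a0 | exact: hp | exact: stab_unit hd hs].
apply: hf_anti; [exact: ha0 | exact: ha1 | exact: hb | | exact: c1].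
by rewrite cabs_ge0 hc_max.
Qed.
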